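(* Let $x,y$ be real numbers with $y\neq 0$ such that either $x/y\ge 1$ or $x/y\le -(\sqrt2+1)^2$. Then $$\sum_{k = 1}^\infty \frac{(27xy)^k }{k^2 (x + y)^{2k} \binom{3k}k} = 6\arctan ^2 \bigg( \frac{\sqrt 3\sqrt[3]{y} }{2\sqrt[3]{x} - \sqrt[3]{y} } \bigg) - \frac{1}{2}\log ^2 \bigg( \frac{x + y}{(\sqrt[3]{x} + \sqrt[3]{y} )^3 } \bigg).$$
   Context: $\sqrt[3]{t}$ denotes the real cube root of the real number $t$ (negative for $t<0$). *)

(* Defs.v *)
From Stdlib Require Import Reals.
From Coquelicot Require Import Coquelicot.
Open Scope R_scope.

Definition cbrt (t : R) : R :=
  if Rlt_dec 0 t then Rpower t (1/3)
  else if Rlt_dec t 0 then - Rpower (- t) (1/3)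
  else 0.

(* k-th term of the series, k >= 1. *)
Definition series_term (x y : R) (k : nat) : R :=
  (27 * x * y) ^ k /
  ((INR k) ^ 2 * (x + y) ^ (2 * k) * Binomial.C (3 * k) k).

(* Main.v *)
Require Import Defs.
From Stdlib Require Import Reals Lra Lia Psatz Factorial.
From Coquelicot Require Import Coquelicot.
Open Scope R_scope.


Lemma C_rec (k : nat) :
  Binomial.C (3 * S k) (S k) =
  Binomial.C (3 * k) k * ((3 * INR k + 3) * (3 * INR k + 2) * (3 * INR k + 1))
   / ((INR k + 1) * (2 * INR k + 2) * (2 * INR k + 1)).
Proof.
  unfold Binomial.C.
  replace (3 * S k - S k)%nat with (S (S (2 * k))) by lia.
  replace (3 * k - k)%nat with (2 * k)%nat by lia.
  replace (3 * S k)%nat with (S (S (S (3 * k)))) by lia.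
  rewrite !fact_simpl, !mult_INR, !S_INR, !mult_INR.
  simpl (INR 2); simpl (INR 3).
  assert (H1 := INR_fact_neq_0 (3*k)).
  assert (H2 := INR_fact_neq_0 k).
  assert (H3 := INR_fact_neq_0 (2*k)).
  assert (0 <= INR k) by apply pos_INR.
  field; repeat split; try lra.
Qed.

Lemma C_pos (n k : nat) : 0 < Binomial.C n k.
Proof.
  unfold Binomial.C. apply Rdiv_lt_0_compat. apply INR_fact_lt_0.
  apply Rmult_lt_0_compat; apply INR_fact_lt_0.
Qed.

Definition ak (n : nat) : R :=
  match n with O => 0 | _ => 1 / (INR n ^ 2 * Binomial.C (3 * n) n) end.

Definition M0 : R := 27 / 4.

Definition bq (k : nat) : R := Binomial.C (3 * k) k * (4 / 27) ^ k.
Definition dq (k : nat) : R := 1 / (INR k * bq k).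

Lemma bq_pos k : 0 < bq k.
Proof. unfold bq. apply Rmult_lt_0_compat. apply C_pos. apply pow_lt; lra. Qed.

Lemma ak_M0 (k : nat) : (1 <= k)%nat -> ak k * M0 ^ k = 1 / (INR k ^ 2 * bq k).
Proof.
  intros Hk. destruct k as [|k]; [lia|].
  unfold ak, bq, M0. set (n := S k).
  assert (Hc := C_pos (3*n) n).
  assert (0 < INR n) by (apply lt_0_INR; unfold n; lia).
  assert (E : (27/4)^n * (4/27)^n = 1) by (rewrite <- Rpow_mult_distr; replace (27/4*(4/27)) with 1 by field; apply pow1).
  assert (0 < (4/27)^n) by (apply pow_lt; lra).
  replace ((27/4)^n) with (/ (4/27)^n) by (apply (Rmult_eq_reg_r ((4/27)^n)); [rewrite E; field|]; lra).
  field. repeat split; lra.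
Qed.

Lemma ak_bound (k : nat) : (1 <= k)%nat -> ak k * M0 ^ k <= 5 * (dq k - dq (S k)).
Proof.
  intros Hk. rewrite ak_M0 by lia. unfold dq.
  assert (Hb := bq_pos k).
  assert (HK : 1 <= INR k) by (apply (le_INR 1); lia).
  assert (Eb : bq (S k) = bq k * (4/27 * ((3 * INR k + 3) * (3 * INR k + 2) * (3 * INR k + 1))
   / ((INR k + 1) * (2 * INR k + 2) * (2 * INR k + 1)))).
  { unfold bq. rewrite C_rec. simpl pow. field. lra. }
  rewrite Eb, S_INR.
  set (K := INR k) in *.
  assert (Er : (K + 1) * (4/27 * ((3 * K + 3) * (3 * K + 2) * (3 * K + 1))
   / ((K + 1) * (2 * K + 2) * (2 * K + 1))) = (18*K^2+18*K+4)/(9*(2*K+1))) by (field; lra).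
  replace (1 / ((K + 1) * (bq k * (4 / 27 * ((3 * K + 3) * (3 * K + 2) * (3 * K + 1)) /
              ((K + 1) * (2 * K + 2) * (2 * K + 1))))))
    with (9*(2*K+1) / ((18*K^2+18*K+4) * bq k)).
  2:{ field. repeat split; nra. }
  assert (0 < 18*K^2+18*K+4) by nra.
  apply Rminus_le_0.
  replace (5 * (1 / (K * bq k) - 9 * (2 * K + 1) / ((18 * K ^ 2 + 18 * K + 4) * bq k)) -
1 / (K ^ 2 * bq k)) with ((27*K^2+2*K-4) / (K^2 * (18 * K ^ 2 + 18 * K + 4) * bq k)).
  2:{ field. repeat split; nra. }
  apply Rmult_le_pos. nra. left. apply Rinv_0_lt_compat.
  apply Rmult_lt_0_compat; [|lra]. nra.
Qed.


Lemma ak_nonneg k : 0 <= ak k.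
Proof.
  destruct k as [|k]; [unfold ak; lra|].
  change (ak (S k)) with (1 / (INR (S k) ^ 2 * Binomial.C (3 * S k) (S k))).
  left. apply Rdiv_lt_0_compat; [lra|]. apply Rmult_lt_0_compat.
  apply pow_lt. apply lt_0_INR; lia. apply C_pos.
Qed.

Lemma dq_pos k : (1 <= k)%nat -> 0 < dq k.
Proof.
  intros. unfold dq. apply Rdiv_lt_0_compat; [lra|]. apply Rmult_lt_0_compat.
  apply lt_0_INR; lia. apply bq_pos.
Qed.

Lemma sum_Sn_R (a : nat -> R) n : sum_n a (S n) = sum_n a n + a (S n).
Proof. rewrite sum_Sn. reflexivity. Qed.

Lemma sum_bound N : sum_n (fun k => ak k * M0^k) N <= 5*(dq 1 - dq (S N)).
Proof.
  induction N.
  - rewrite sum_O. change (ak 0) with 0. rewrite Rmult_0_l. lra.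
  - rewrite sum_Sn_R.
    assert (H := ak_bound (S N) (le_n_S 0 _ (Nat.le_0_l _))). lra.
Qed.

Lemma series_M0 : ex_series (fun k => ak k * M0^k).
Proof.
  assert (Hf : ex_finite_lim_seq (sum_n (fun k => ak k * M0^k))).
  { apply ex_finite_lim_seq_incr with (M := 5 * dq 1).
    - intros n. rewrite sum_Sn_R.
      assert (0 <= ak (S n) * M0 ^ S n) by (apply Rmult_le_pos; [apply ak_nonneg| apply pow_le; unfold M0; lra]). lra.
    - intros n. assert (H := sum_bound n). assert (H2 := dq_pos (S n) (le_n_S 0 _ (Nat.le_0_l _))). lra. }
  destruct Hf as [l Hl]. exists l.
  apply is_series_Reals. apply is_lim_seq_Reals in Hl.
  intros eps Heps. destruct (Hl eps Heps) as [N HN]. exists N. intros n Hn.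
  rewrite <- sum_n_Reals. apply HN. auto.
Qed.

Lemma Un_cv_of_is_series (a : nat -> R) l : is_series a l -> Un_cv (sum_f_R0 a) l.
Proof. intros H. apply is_series_Reals in H. exact H. Qed.

Definition clamp (z : R) : R := (Rabs (z + M0) - Rabs (z - M0)) / 2.

Lemma clamp_bound z : Rabs (clamp z) <= M0.
Proof. unfold clamp, M0. unfold Rabs; repeat destruct Rcase_abs; lra. Qed.

Lemma clamp_id z : Rabs z <= M0 -> clamp z = z.
Proof. unfold clamp, M0. unfold Rabs; repeat destruct Rcase_abs; lra. Qed.

Lemma clamp_cont : continuity clamp.
Proof.
  unfold clamp. intros z. apply continuity_pt_mult.
  2:{ apply continuity_pt_const. intros a b; reflexivity. }
  apply continuity_pt_minus.
  - apply (continuity_pt_comp (fun z => z + M0) Rabs).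
    apply continuity_pt_plus. apply derivable_continuous_pt, derivable_pt_id.
    apply continuity_pt_const. intros a b; reflexivity. apply Rcontinuity_abs.
  - apply (continuity_pt_comp (fun z => z - M0) Rabs).
    apply continuity_pt_minus. apply derivable_continuous_pt, derivable_pt_id.
    apply continuity_pt_const. intros a b; reflexivity. apply Rcontinuity_abs.
Qed.

Definition fn (n : nat) (z : R) : R := ak n * (clamp z) ^ n.

Lemma fn_CVN : CVN_R fn.
Proof.
  intros r. exists (fun n => ak n * M0 ^ n).
  exists (Series (fun k => ak k * M0^k)).
  assert (Hl := Series_correct _ series_M0). split.
  - apply Un_cv_of_is_series. eapply is_series_ext; [|exact Hl].
    intros n. simpl. rewrite Rabs_right; [reflexivity|].
    apply Rle_ge, Rmult_le_pos; [apply ak_nonneg| apply pow_le; unfold M0; lra].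
  - intros n y _. unfold fn. rewrite Rabs_mult, Rabs_right by (apply Rle_ge, ak_nonneg).
    apply Rmult_le_compat_l; [apply ak_nonneg|]. rewrite <- RPow_abs.
    apply pow_incr. split; [apply Rabs_pos| apply clamp_bound].
Qed.

Definition Fc : R -> R := SFL fn (CVN_R_CVS fn fn_CVN).

Lemma Fc_cont : continuity Fc.
Proof.
  apply SFL_continuity; [apply fn_CVN|]. intros n z. unfold fn.
  apply continuity_pt_mult. apply continuity_pt_const; intros a b; reflexivity.
  apply (continuity_pt_comp clamp (fun w => w ^ n)). apply clamp_cont.
  apply derivable_continuous_pt, derivable_pt_pow.
Qed.

Lemma ex_series_z z : Rabs z <= M0 -> ex_series (fun k => ak k * z ^ k).
Proof.
  intros Hz. apply (@ex_series_le R_AbsRing R_CompleteNormedModule _ (fun k => ak k * M0 ^ k)); [|apply series_M0].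
  intros n. unfold norm; simpl. unfold abs; simpl.
  rewrite Rabs_mult, Rabs_right by (apply Rle_ge, ak_nonneg).
  apply Rmult_le_compat_l; [apply ak_nonneg|]. rewrite <- RPow_abs.
  apply pow_incr. split; [apply Rabs_pos| exact Hz].
Qed.

Lemma Fc_eq z : Rabs z <= M0 -> Fc z = PSeries ak z.
Proof.
  intros Hz. unfold Fc, SFL. destruct (CVN_R_CVS fn fn_CVN z) as [l Hl]. simpl.
  assert (H := Series_correct _ (ex_series_z z Hz)).
  apply Un_cv_of_is_series in H.
  eapply UL_sequence; [exact Hl|]. unfold SP, fn. rewrite clamp_id by auto. exact H.
Qed.

Lemma PSeries_shift z : Rabs z <= M0 ->
  is_series (fun n => ak (S n) * z ^ (S n)) (PSeries ak z).
Proof.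
  intros Hz. apply (is_series_incr_1 (fun n => ak n * z ^ n)).
  match goal with |- is_series _ ?L => replace L with (PSeries ak z) end.
  2:{ change (ak 0) with 0. unfold plus; simpl. ring. }
  unfold PSeries. apply Series_correct, ex_series_z, Hz.
Qed.


Lemma is_RInt_val (f : R -> R) a b l l' : is_RInt f a b l -> l = l' -> is_RInt f a b l'.
Proof. intros H ->; exact H. Qed.

Lemma exd_cont (f : R -> R) x : ex_derive f x -> continuous f x.
Proof. apply (ex_derive_continuous (K:=R_AbsRing) (V:=R_NormedModule)). Qed.

Ltac fixINR := repeat match goal with |- context [match ?m with 0%nat => 1 | S _ => INR ?m + 1 end] =>
  change (match m with 0%nat => 1 | S _ => INR m + 1 end) with (INR (S m)) end.

Lemma beta_int (n : nat) : forall m : nat,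
  is_RInt (fun s => s ^ m * (1 - s) ^ n) 0 1
    (INR (fact m) * INR (fact n) / INR (fact (m + n + 1))).
Proof.
  induction n as [|n IH]; intros m.
  - eapply is_RInt_ext.
    2:{ eapply is_RInt_val.
        apply (is_RInt_derive (fun s => s ^ (S m) / INR (S m)) (fun s => s ^ m)).
        + intros z _. auto_derive; [auto|]. fixINR. field. apply not_0_INR. lia.
        + intros z _. apply exd_cont. auto_derive. auto.
        + unfold minus, plus, opp; simpl. rewrite Nat.add_0_r.
          replace (m + 1)%nat with (S m) by lia. rewrite (fact_simpl m), mult_INR.
          assert (H1 := INR_fact_neq_0 m). assert (H2 : INR (S m) <> 0) by (apply not_0_INR; lia).
          fixINR. rewrite pow1. field. auto. }
    intros z _. simpl. ring.
  - set (F := fun s => s ^ (S m) * (1 - s) ^ (S n)).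
    set (dF := fun s => INR (S m) * s ^ m * (1 - s) ^ (S n) - INR (S n) * s ^ (S m) * (1 - s) ^ n).
    assert (HF : is_RInt dF 0 1 0).
    { eapply is_RInt_val.
      apply (is_RInt_derive F dF).
      + intros z _. unfold F, dF. auto_derive; [auto|]. replace (1 + - z) with (1 - z) by ring. simpl. ring.
      + intros z _. apply exd_cont. unfold dF. auto_derive. auto.
      + unfold minus, plus, opp, F; simpl. ring. }
    assert (H2 := IH (S m)).
    assert (HS : INR (S m) <> 0) by (apply not_0_INR; lia).
    assert (H3 := is_RInt_plus _ _ _ _ _ _ HF (is_RInt_scal _ _ _ (INR (S n)) _ H2)).
    assert (H4 := is_RInt_scal _ _ _ (/ INR (S m)) _ H3).
    eapply is_RInt_ext.
    2:{ eapply is_RInt_val. exact H4.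
        unfold plus, scal; simpl. unfold mult; simpl.
        replace (S m + n + 1)%nat with (m + S n + 1)%nat by lia.
        fixINR. replace (m + S n + 1)%nat with (S (m+n+1)) by lia. rewrite fact_simpl.
        rewrite !plus_INR, !mult_INR, !S_INR, !plus_INR. simpl (INR 1).
        assert (H1 := INR_fact_neq_0 m). assert (H5 := INR_fact_neq_0 (m + S n + 1)).
        assert (0 <= INR m) by apply pos_INR. assert (0 <= INR n) by apply pos_INR.
        assert (H6 := INR_fact_lt_0 (m+n+1)).
        field. repeat split; nra. }
    intros z _. unfold dF, scal, plus; simpl. unfold mult; simpl. field. auto.
Qed.


Lemma e_int n : is_RInt (fun s => s ^ n * (1 - s) ^ (2 * n + 2)) 0 1 (INR (S n) * ak (S n)).
Proof.
  eapply is_RInt_val. apply beta_int.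
  change (ak (S n)) with (1 / (INR (S n) ^ 2 * Binomial.C (3 * S n) (S n))).
  unfold Binomial.C.
  replace (3 * S n - S n)%nat with (2 * n + 2)%nat by lia.
  replace (n + (2 * n + 2) + 1)%nat with (3 * S n)%nat by lia.
  rewrite (fact_simpl n), mult_INR.
  assert (H1 := INR_fact_neq_0 n). assert (H2 := INR_fact_neq_0 (2*n+2)).
  assert (H3 := INR_fact_neq_0 (3 * S n)). assert (H4 : INR (S n) <> 0) by (apply not_0_INR; lia).
  match goal with |- ?a = ?b => change (@eq R a b) end. field. auto.
Qed.

Lemma sq_bound s : 0 <= s <= 1 -> 0 <= s * (1 - s) ^ 2 <= 4 / 27.
Proof. intros H. split. apply Rmult_le_pos; [lra| apply pow2_ge_0].
  assert (0 <= (s - 1/3)^2 * (4/3 - s)) by (apply Rmult_le_pos; [apply pow2_ge_0|lra]). nra. Qed.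

Lemma partial_int (v : R) N :
  is_RInt (fun s => sum_n (fun k => v ^ (S k) * (s ^ k * (1 - s) ^ (2 * k + 2))) N) 0 1
     (sum_n (fun k => INR (S k) * ak (S k) * v ^ (S k)) N).
Proof.
  induction N.
  - eapply is_RInt_ext. 2:{ eapply is_RInt_val. apply (is_RInt_scal _ _ _ (v ^ 1) _ (e_int 0)).
       rewrite sum_O. unfold scal; simpl. unfold mult; simpl. ring. }
    intros x _. rewrite sum_O. reflexivity.
  - eapply is_RInt_ext. 2:{ eapply is_RInt_val. apply (is_RInt_plus _ _ _ _ _ _ IHN (is_RInt_scal _ _ _ (v ^ (S (S N))) _ (e_int (S N)))).
       rewrite sum_Sn_R. unfold scal, plus; simpl. unfold mult; simpl. ring. }
    intros x _. rewrite sum_Sn_R. reflexivity.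
Qed.

Lemma geom_id (v s : R) N : v * s * (1 - s)^2 <> 1 ->
  sum_n (fun k => v ^ (S k) * (s ^ k * (1 - s) ^ (2 * k + 2))) N
  = v * (1 - s)^2 / (1 - v * s * (1 - s)^2) * (1 - (v * s * (1 - s)^2) ^ (S N)).
Proof.
  intros Hq. induction N.
  - rewrite sum_O. simpl. field. lra.
  - rewrite sum_Sn_R, IHN.
    replace ((1 - s) ^ (2 * S N + 2)) with (((1-s)^2)^(S N) * (1-s)^2) by (rewrite <- pow_mult, <- pow_add; f_equal; lia).
    rewrite !Rpow_mult_distr. simpl. field. lra.
Qed.

Lemma series_from_int (v c : R) :
  Rabs v < M0 ->
  is_RInt (fun s => v * (1 - s)^2 / (1 - v * s * (1 - s)^2)) 0 1 c ->
  is_series (fun n => INR (S n) * ak (S n) * v ^ (S n)) c.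
Proof.
  intros Hv Hc. unfold M0 in Hv.
  set (rho := Rabs v * (4/27)).
  assert (Hrho : 0 <= rho < 1) by (unfold rho; split; [apply Rmult_le_pos; [apply Rabs_pos|lra]|lra]).
  assert (Hq : forall s, 0 <= s <= 1 -> Rabs (v * s * (1 - s)^2) <= rho).
  { intros s Hs. rewrite Rmult_assoc, Rabs_mult. unfold rho.
    apply Rmult_le_compat_l. apply Rabs_pos. destruct (sq_bound s Hs).
    rewrite Rabs_right; lra. }
  assert (Hq1 : forall s, 0 <= s <= 1 -> v * s * (1 - s)^2 <> 1).
  { intros s Hs E. assert (H := Hq s Hs). rewrite E, Rabs_R1 in H. lra. }
  set (G := Rabs v / (1 - rho)).
  assert (Hg : forall s, 0 <= s <= 1 -> Rabs (v * (1 - s)^2 / (1 - v * s * (1 - s)^2)) <= G).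
  { intros s Hs. unfold G. assert (H := Hq s Hs).
    assert (Hd : 1 - rho <= Rabs (1 - v * s * (1 - s)^2)).
    { apply Rabs_le_between in H. unfold Rabs; destruct Rcase_abs; lra. }
    unfold Rdiv. rewrite !Rabs_mult, Rabs_inv.
    assert (0 <= (1 - s)^2 <= 1) by (split; [apply pow2_ge_0| nra]).
    rewrite (Rabs_right ((1-s)^2)) by lra.
    apply Rmult_le_compat. apply Rmult_le_pos; [apply Rabs_pos|lra].
    left; apply Rinv_0_lt_compat; lra.
    assert (0 <= Rabs v) by apply Rabs_pos. nra.
    apply Rinv_le_contravar; lra. }
  apply is_series_Reals. intros eps Heps.
  assert (HG : 0 <= G) by (unfold G; apply Rmult_le_pos; [apply Rabs_pos| left; apply Rinv_0_lt_compat; lra]).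
  destruct (pow_lt_1_zero rho ltac:(rewrite Rabs_right; lra) (eps / (G + 1))) as [N HN].
  { apply Rdiv_lt_0_compat; lra. }
  exists N. intros n Hn. unfold R_dist. rewrite <- sum_n_Reals.
  set (F := fun y => v * (1 - y)^2 / (1 - v * y * (1 - y)^2)
     - sum_n (fun k => v ^ (S k) * (y ^ k * (1 - y) ^ (2 * k + 2))) n).
  assert (HI : is_RInt F 0 1 (c - sum_n (fun k => INR (S k) * ak (S k) * v ^ (S k)) n)).
  { eapply is_RInt_ext. 2:{ eapply is_RInt_val. apply (is_RInt_minus _ _ _ _ _ _ Hc (partial_int v n)).
      unfold minus, plus, opp; simpl. reflexivity. }
    intros y _. unfold F, minus, plus, opp; simpl. reflexivity. }
  assert (Hex : ex_RInt F 0 1) by (eexists; exact HI).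
  assert (HI2 : RInt F 0 1 = c - sum_n (fun k => INR (S k) * ak (S k) * v ^ (S k)) n) by (apply is_RInt_unique; exact HI).
  assert (Hb := abs_RInt_le_const F 0 1 (G * rho ^ (S n)) ltac:(lra) Hex).
  rewrite HI2 in Hb.
  rewrite Rabs_minus_sym.
  eapply Rle_lt_trans. apply Hb.
  { intros s Hs. unfold F. rewrite geom_id by (apply Hq1; lra).
    set (q := v * s * (1 - s)^2). set (g := v * (1 - s) ^ 2 / (1 - q)).
    replace (g - (g * (1 - q ^ S n))) with (g * q ^ S n) by ring.
    rewrite Rabs_mult, <- RPow_abs. apply Rmult_le_compat; try apply Rabs_pos.
    apply pow_le, Rabs_pos. apply Hg; lra. apply pow_incr. split; [apply Rabs_pos| apply Hq; lra]. }
  assert (Hp := HN (S n) ltac:(lia)). rewrite Rabs_right in Hp by (apply Rle_ge, pow_le; lra).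
  assert (G * rho ^ S n <= G * (eps / (G + 1))) by (apply Rmult_le_compat_l; lra).
  assert (G * (eps / (G + 1)) < eps).
  { apply (Rmult_lt_reg_r (G+1)); [lra|]. field_simplify; lra. }
  lra.
Qed.


Lemma dR_plus (f g : R -> R) x a b : is_derive f x a -> is_derive g x b -> is_derive (fun y => f y + g y) x (a + b).
Proof. intros. apply (is_derive_plus f g x a b); auto. Qed.
Lemma dR_minus (f g : R -> R) x a b : is_derive f x a -> is_derive g x b -> is_derive (fun y => f y - g y) x (a - b).
Proof. intros. apply (is_derive_minus f g x a b); auto. Qed.
Lemma dR_mult (f g : R -> R) x a b : is_derive f x a -> is_derive g x b -> is_derive (fun y => f y * g y) x (a * g x + f x * b).
Proof. intros. apply (is_derive_mult f g x a b); auto. intros; apply Rmult_comm. Qed.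
Lemma dR_comp (f g : R -> R) x a b : is_derive f (g x) a -> is_derive g x b -> is_derive (fun y => f (g y)) x (b * a).
Proof. intros. apply (is_derive_comp f g x a b); auto. Qed.

Ltac Req := match goal with |- ?a = ?b => change (@eq R a b) end.

Definition r3 : R := sqrt 3.
Lemma r3_pos : 0 < r3.
Proof. unfold r3. apply sqrt_lt_R0. lra. Qed.
Lemma r3_sq : r3 * r3 = 3.
Proof. unfold r3. apply sqrt_sqrt. lra. Qed.
Lemma r3_sqm y : (r3 * y) ^ 2 = 3 * y ^ 2.
Proof. rewrite Rpow_mult_distr. simpl. rewrite Rmult_1_r, r3_sq. ring. Qed.

Lemma datan_quot (N D : R -> R) dN dD x :
  is_derive N x dN -> is_derive D x dD -> D x <> 0 ->
  is_derive (fun y => atan (N y / D y)) x ((dN * D x - N x * dD) / (D x ^ 2 + N x ^ 2)).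
Proof.
  intros HN HD HDx.
  assert (H := is_derive_comp atan (fun y => N y / D y) x _ _ (is_derive_atan _) (is_derive_div _ _ _ _ _ HN HD HDx)).
  eapply is_derive_ext. intros t; reflexivity.
  eapply is_derive_ext_loc in H. 2:{ apply filter_forall. intros; reflexivity. }
  replace ((dN * D x - N x * dD) / (D x ^ 2 + N x ^ 2)) with
    ((dN * D x - N x * dD) / D x ^ 2 * / (1 + (N x / D x)²)). exact H.
  unfold Rsqr. assert (0 < D x ^ 2) by (apply pow2_gt_0; auto).
  assert (0 <= N x ^ 2) by apply pow2_ge_0.
  field. split; auto. nra.
Qed.

Lemma deriv_cont (f : R -> R) x l : is_derive f x l -> continuity_pt f x.
Proof.
  intros H. apply continuity_pt_filterlim.
  apply (ex_derive_continuous (K:=R_AbsRing) (V:=R_NormedModule)). eexists; exact H.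
Qed.

Lemma const_on (f : R -> R) a b :
  (forall x, Rmin a b <= x <= Rmax a b -> is_derive f x 0) -> f b = f a.
Proof.
  intros H. destruct (MVT_gen f a b (fun _ => 0)) as [c [_ Hc]].
  - intros x Hx. apply H. lra.
  - intros x Hx. eapply deriv_cont. apply H. exact Hx.
  - lra.
Qed.

Lemma is_derive_val (f : R -> R) x l l' : is_derive f x l -> l = l' -> is_derive f x l'.
Proof. intros H ->; exact H. Qed.
Lemma is_derive_fun (f g : R -> R) x l : is_derive f x l -> (forall y, f y = g y) -> is_derive g x l.
Proof. intros H E. eapply is_derive_ext; [exact E| exact H]. Qed.

Definition Af (t : R) : R := atan (r3 * t / (2 - t)).

Lemma dAf t : t < 2 -> is_derive Af t (r3 / (2 * (1 - t + t ^ 2))).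
Proof.
  intros Ht. unfold Af.
  eapply is_derive_ext. intros; reflexivity.
  eapply (is_derive_ext_loc (fun y => atan ((fun y => r3 * y) y / (fun y => 2 - y) y))).
  { apply filter_forall. reflexivity. }
  eapply is_derive_ext. intros; reflexivity.
  replace (r3 / (2 * (1 - t + t ^ 2))) with ((r3 * 1 * (2 - t) - r3 * t * (-1)) / ((2 - t) ^ 2 + (r3 * t) ^ 2)).
  apply datan_quot. auto_derive; auto; ring. auto_derive; auto; ring. lra.
  rewrite r3_sqm. field. split; nra.
Qed.

Lemma atan_id t : -1 < t < 1 ->
  atan ((1 + t) / (r3 * (1 - t))) - atan ((t ^ 2 - 4 * t + 1) / (r3 * (1 - t ^ 2))) = 3 * Af t.
Proof.
  intros Ht.
  set (phi := fun t => atan ((1 + t) / (r3 * (1 - t))) - atan ((t ^ 2 - 4 * t + 1) / (r3 * (1 - t ^ 2))) - 3 * Af t).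
  assert (H0 : phi 0 = 0).
  { unfold phi, Af. replace (r3 * 0 / (2 - 0)) with 0 by field. rewrite atan_0.
    replace ((0 ^ 2 - 4 * 0 + 1) / (r3 * (1 - 0 ^ 2))) with ((1 + 0) / (r3 * (1 - 0))) by (field; apply Rgt_not_eq, r3_pos). ring. }
  assert (Hc : phi t = phi 0).
  { apply const_on. intros x Hx.
    assert (Hx' : -1 < x < 1) by (unfold Rmin, Rmax in Hx; destruct Rle_dec; lra).
    assert (Hr := r3_pos).
    assert (D1 := datan_quot (fun y => 1 + y) (fun y => r3 * (1 - y)) 1 (- r3) x
       ltac:(auto_derive; auto; ring) ltac:(auto_derive; auto; ring) ltac:(apply Rmult_integral_contrapositive; split; lra)).
    assert (D2 := datan_quot (fun y => y ^ 2 - 4 * y + 1) (fun y => r3 * (1 - y ^ 2)) (2 * x - 4) (- 2 * r3 * x) x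
       ltac:(auto_derive; auto; ring) ltac:(auto_derive; auto; ring) ltac:(apply Rmult_integral_contrapositive; split; nra)).
    assert (D3 := dAf x ltac:(lra)).
    assert (D := dR_minus _ _ _ _ _ (dR_minus _ _ _ _ _ D1 D2) (is_derive_scal _ _ 3 _ D3)).
    eapply is_derive_fun. eapply is_derive_val. exact D.
    - Req. cbv beta. rewrite !r3_sqm. field. split; [nra|]. split; [nra|]. nra.
    - intros y. unfold phi. reflexivity. }
  unfold phi in Hc, H0. lra.
Qed.

Lemma r3_sq2 : r3 ^ 2 = 3. Proof. simpl. rewrite Rmult_1_r. apply r3_sq. Qed.


Definition uf (t : R) : R := 27 * t ^ 3 / (1 + t ^ 3) ^ 2.
Definition Bf (t : R) : R := ln ((1 - t + t ^ 2) / (1 + t) ^ 2).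
Definition cf (t : R) : R := t * (2 * r3 * (1 + t) * Af t + (1 - t) * Bf t) / (1 - t ^ 3).
Definition gint (v s : R) : R := v * (1 - s) ^ 2 / (1 - v * s * (1 - s) ^ 2).

Lemma ftc_main t : -1 < t < 1 -> t <> 0 -> is_RInt (gint (uf t)) 0 1 (cf t).
Proof.
  intros Ht Ht0.
  assert (Hr := r3_pos).
  set (p := (1 + t) ^ 2). set (b := t ^ 2 - 4 * t + 1). set (q := (1 - t + t ^ 2) ^ 2).
  set (al := (1 - t + t ^ 2) / (3 * (1 + t + t ^ 2))).
  set (be := 2 * (1 + t) ^ 2 / (3 * (1 + t + t ^ 2))).
  set (ka := 2 * t * (1 + t) / (r3 * ((1 + t + t ^ 2) * (1 - t)))).
  set (K := r3 * ((1 - t ^ 2) / 2)).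
  set (Qf := fun s => (3 * t * s) ^ 2 + b * (3 * t * s) + q).
  set (L := fun s => - al * ln (p - 3 * t * s) - be / 2 * ln (Qf s)).
  set (G := fun s => L s + ka * atan ((3 * t * s + b / 2) / K)).
  assert (Hpos1 : forall s, 0 <= s <= 1 -> 0 < p - 3 * t * s).
  { intros s Hs. unfold p. destruct (Rle_lt_dec 0 t); nra. }
  assert (HQ : forall s, Qf s = (3 * t * s + b / 2) ^ 2 + 3 * (1 - t ^ 2) ^ 2 / 4).
  { intros s. unfold Qf, b, q. field. }
  assert (Hpos2 : forall s, 0 < Qf s).
  { intros s. rewrite HQ. assert (0 < (1 - t ^ 2) ^ 2) by (apply pow2_gt_0; nra).
    assert (0 <= (3 * t * s + b / 2) ^ 2) by apply pow2_ge_0. lra. }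
  assert (Hfac : forall s, (1 + t ^ 3) ^ 2 * (1 - uf t * s * (1 - s) ^ 2) = (p - 3 * t * s) * Qf s).
  { intros s. unfold uf, p, Qf, b, q. field. nra. }
  assert (Hden : forall s, 0 <= s <= 1 -> 1 - uf t * s * (1 - s) ^ 2 <> 0).
  { intros s Hs E. assert (H := Hfac s). rewrite E, Rmult_0_r in H.
    assert (H1 := Hpos1 s Hs). assert (H2 := Hpos2 s). nra. }
  assert (HK : K <> 0) by (unfold K; apply Rmult_integral_contrapositive; split; nra).
  assert (HD : forall s, 0 <= s <= 1 -> is_derive G s (gint (uf t) s)).
  { intros s Hs.
    assert (DL : is_derive L s (- al * (- (3 * t) / (p - 3 * t * s)) - be / 2 * ((2 * (3 * t * s) * (3 * t) + b * (3 * t)) / Qf s))).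
    { unfold L, Qf. auto_derive.
      - split. apply Hpos1; auto. split; [|auto]. apply Hpos2.
      - Req. assert (H1 := Hpos1 s Hs). assert (H2 := Hpos2 s). unfold Qf in H2.
        field. split; simpl; nra. }
    assert (DA := datan_quot (fun s => 3 * t * s + b / 2) (fun _ => K) (3 * t) 0 s
       ltac:(auto_derive; auto; ring) ltac:(auto_derive; auto) HK).
    assert (D := dR_plus _ _ _ _ _ DL (is_derive_scal _ _ ka _ DA)).
    eapply is_derive_fun. eapply is_derive_val. exact D.
    - Req. cbv beta. unfold K at 2. rewrite r3_sqm.
      replace (3 * ((1 - t ^ 2) / 2) ^ 2 + (3 * t * s + b / 2) ^ 2) with (Qf s) by (rewrite HQ; field).
      unfold gint.
      assert (E : 1 - uf t * s * (1 - s) ^ 2 = (p - 3 * t * s) * Qf s / (1 + t ^ 3) ^ 2).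
      { rewrite <- Hfac. field. nra. }
      rewrite E. assert (H1 := Hpos1 s Hs). assert (H2 := Hpos2 s).
      assert (H3 : 1 + t ^ 3 <> 0) by nra.
      unfold Qf in *. unfold uf, al, be, ka, K, p, b, q in *. Req.
      field. repeat split; try lra; nra.
    - intros y. unfold G. reflexivity. }
  eapply is_RInt_val. apply (is_RInt_derive G (gint (uf t))).
  - intros s Hs. rewrite Rmin_left, Rmax_right in Hs by lra. apply HD; auto.
  - intros s Hs. rewrite Rmin_left, Rmax_right in Hs by lra. apply exd_cont.
    unfold gint. auto_derive. apply Hden; auto.
  - Req. unfold minus, plus, opp; simpl. unfold G, L, Qf.
    set (m := 1 - t + t ^ 2).
    assert (Hm : 0 < m) by (unfold m; nra).
    assert (Hp : 0 < (1 + t) ^ 2) by (apply pow2_gt_0; lra).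
    replace (p - 3 * t * 1) with m by (unfold p, m; ring).
    assert (E0 : p - 3 * t * 0 = (1 + t) ^ 2) by (unfold p; ring). rewrite E0.
    replace ((3 * t * 1) ^ 2 + b * (3 * t * 1) + q) with ((1 + t) ^ 2 * m) by (unfold b, q, m; ring).
    replace ((3 * t * 0) ^ 2 + b * (3 * t * 0) + q) with (m * m) by (unfold q, m; ring).
    replace ((3 * t * 1 + b / 2) / K) with ((1 + t) / (r3 * (1 - t))) by (unfold b, K; field; split; nra).
    replace ((3 * t * 0 + b / 2) / K) with ((t ^ 2 - 4 * t + 1) / (r3 * (1 - t ^ 2))) by (unfold b, K; field; split; nra).
    rewrite !ln_mult by lra.
    assert (HA := atan_id t Ht).
    replace (atan ((t ^ 2 - 4 * t + 1) / (r3 * (1 - t ^ 2)))) with (atan ((1 + t) / (r3 * (1 - t))) - 3 * Af t) by lra.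
    unfold cf, Bf. fold m. rewrite ln_div by lra.
    assert (Eka : ka = 2 * r3 / 3 * (t * (1 + t) / ((1 + t + t^2) * (1 - t)))).
    { unfold ka. field_simplify_eq. rewrite r3_sq2. ring. split; nra. }
    rewrite Eka. unfold al, be. field. split; nra.
Qed.


Definition hf (t : R) : R := 6 * Af t ^ 2 - 1 / 2 * Bf t ^ 2.

Lemma pos13 t : -1 < t -> 0 < 1 + t ^ 3.
Proof. intros. replace (1 + t ^ 3) with ((1 + t) * (1 - t + t ^ 2)) by ring.
  apply Rmult_lt_0_compat; nra. Qed.

Ltac nz := repeat split; try assumption; try (apply Rgt_not_eq; nra); try (apply Rlt_not_eq; nra).

Lemma dBf t : -1 < t -> is_derive Bf t (- 3 * (1 - t) / (1 + t ^ 3)).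
Proof.
  intros Ht. unfold Bf. auto_derive.
  - split; [nra|]. split; [|auto]. apply Rmult_lt_0_compat; [nra|]. apply Rinv_0_lt_compat; nra.
  - Req. assert (H := pos13 t Ht). field. nz.
Qed.

Lemma dhf t : -1 < t < 2 ->
  is_derive hf t (6 * (2 * (r3 / (2 * (1 - t + t ^ 2))) * Af t) - 1 / 2 * (2 * (- 3 * (1 - t) / (1 + t ^ 3)) * Bf t)).
Proof.
  intros Ht.
  assert (HA := is_derive_pow _ 2 _ _ (dAf t ltac:(lra))).
  assert (HB := is_derive_pow _ 2 _ _ (dBf t ltac:(lra))).
  assert (D := dR_minus _ _ _ _ _ (is_derive_scal _ _ 6 _ HA) (is_derive_scal _ _ (1/2) _ HB)).
  eapply is_derive_fun. eapply is_derive_val. exact D.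
  - Req. simpl. ring.
  - intros y. reflexivity.
Qed.

Lemma duf t : -1 < t -> is_derive uf t (81 * t ^ 2 * (1 - t ^ 3) / (1 + t ^ 3) ^ 3).
Proof.
  intros Ht. unfold uf. auto_derive.
  - assert (H := pos13 t Ht). nz.
  - Req. assert (H := pos13 t Ht). field. nz.
Qed.

Lemma sum_nonneg (f : nat -> R) n : (forall k, 0 <= f k) -> 0 <= sum_n f n.
Proof.
  intros H. induction n. rewrite sum_O. apply H. rewrite sum_Sn_R. specialize (H (S n)). lra.
Qed.

Lemma radius_ge : Rbar_le M0 (CV_radius ak).
Proof.
  destruct (CV_radius_bounded ak) as [Hub _]. apply Hub.
  exists (5 * dq 1). intros n.
  assert (Hn : 0 <= ak n * M0 ^ n) by (apply Rmult_le_pos; [apply ak_nonneg| apply pow_le; unfold M0; lra]).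
  rewrite Rabs_right by lra.
  assert (H1 := sum_bound n). assert (H2 := dq_pos (S n) (le_n_S 0 _ (Nat.le_0_l _))).
  assert (H3 : ak n * M0 ^ n <= sum_n (fun k => ak k * M0 ^ k) n).
  { destruct n. rewrite sum_O. lra. rewrite sum_Sn_R.
    assert (0 <= sum_n (fun k => ak k * M0 ^ k) n).
    { apply sum_nonneg. intros k. apply Rmult_le_pos; [apply ak_nonneg| apply pow_le; unfold M0; lra]. }
    lra. }
  lra.
Qed.

Lemma in_radius v : Rabs v < M0 -> Rbar_lt (Rabs v) (CV_radius ak).
Proof.
  intros Hv. assert (H := radius_ge).
  destruct (CV_radius ak) as [r| |]; simpl in *; auto; lra.
Qed.

Lemma T_closed t : -1 < t < 1 -> t <> 0 -> Rabs (uf t) < M0 ->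
  uf t * PSeries (PS_derive ak) (uf t) = cf t.
Proof.
  intros Ht Ht0 Hv.
  assert (HS := series_from_int (uf t) (cf t) Hv (ftc_main t Ht Ht0)).
  assert (Hex := ex_pseries_derive ak (uf t) (in_radius _ Hv)).
  unfold PSeries. rewrite <- Series_scal_l.
  apply is_series_unique. eapply is_series_ext. 2: exact HS.
  intros n. unfold PS_derive. simpl. ring.
Qed.


Lemma dFc t : -1 < t -> Rabs (uf t) < M0 ->
  is_derive (fun y => Fc (uf y)) t (81 * t ^ 2 * (1 - t ^ 3) / (1 + t ^ 3) ^ 3 * PSeries (PS_derive ak) (uf t)).
Proof.
  intros Ht Hv. apply dR_comp; [|apply duf; auto].
  apply (is_derive_ext_loc (PSeries ak) Fc).
  - assert (He : 0 < M0 - Rabs (uf t)) by lra.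
    exists (mkposreal _ He). intros y0 Hy. assert (Hy2 : Rabs (y0 - uf t) < M0 - Rabs (uf t)) by exact Hy.
    clear Hy. set (y := (y0 : R)) in *. change (PSeries ak y = Fc y). symmetry. apply Fc_eq.
    assert (H := Rabs_triang (y - uf t) (uf t)). replace (y - uf t + uf t) with y in H by ring. lra.
  - apply is_derive_PSeries, in_radius, Hv.
Qed.

Lemma uf_nz t : -1 < t -> t <> 0 -> uf t <> 0.
Proof.
  intros Ht Ht0. unfold uf. assert (H := pos13 t Ht).
  assert (t ^ 3 <> 0) by (apply pow_nonzero; auto).
  apply Rmult_integral_contrapositive. split. apply Rmult_integral_contrapositive. split; lra || auto.
  apply Rinv_neq_0_compat. apply pow_nonzero. lra.
Qed.

Lemma deriv_zero t : -1 < t < 1 -> t <> 0 -> Rabs (uf t) < M0 ->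
  is_derive (fun y => Fc (uf y) - hf y) t 0.
Proof.
  intros Ht Ht0 Hv.
  assert (D := dR_minus _ _ _ _ _ (dFc t ltac:(lra) Hv) (dhf t ltac:(lra))).
  eapply is_derive_fun. eapply is_derive_val. exact D.
  - Req. assert (E := T_closed t Ht Ht0 Hv).
    assert (Hu := uf_nz t ltac:(lra) Ht0).
    replace (PSeries (PS_derive ak) (uf t)) with (cf t / uf t) by (rewrite <- E; field; auto).
    assert (H13 := pos13 t ltac:(lra)).
    assert (Ht3 : t ^ 3 <> 0) by (apply pow_nonzero; auto).
    assert (H1t : 1 - t ^ 3 <> 0) by (apply Rgt_not_eq; nra).
    unfold cf, uf. field. nz.
  - intros y. reflexivity.
Qed.

Definition Allowed (t : R) : Prop := -1 < t <= 1 /\ 4 * Rabs (t ^ 3) <= (1 + t ^ 3) ^ 2.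

Lemma uf_le t : Allowed t -> Rabs (uf t) <= M0.
Proof.
  intros [Ht Hb]. unfold uf, M0. assert (H := pos13 t ltac:(lra)).
  assert (Hp : 0 < (1 + t ^ 3) ^ 2) by (apply pow2_gt_0; lra).
  unfold Rdiv. rewrite Rabs_mult, Rabs_mult, Rabs_inv, (Rabs_right 27) by lra.
  rewrite (Rabs_right ((1 + t ^ 3) ^ 2)) by lra.
  apply (Rmult_le_reg_r ((1 + t ^ 3) ^ 2)); auto. field_simplify; lra.
Qed.

Lemma uf_lt t : -1 < t < 1 -> 4 * Rabs (t ^ 3) < (1 + t ^ 3) ^ 2 -> Rabs (uf t) < M0.
Proof.
  intros Ht Hb. unfold uf, M0. assert (H := pos13 t ltac:(lra)).
  assert (Hp : 0 < (1 + t ^ 3) ^ 2) by (apply pow2_gt_0; lra).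
  unfold Rdiv. rewrite Rabs_mult, Rabs_mult, Rabs_inv, (Rabs_right 27) by lra.
  rewrite (Rabs_right ((1 + t ^ 3) ^ 2)) by lra.
  apply (Rmult_lt_reg_r ((1 + t ^ 3) ^ 2)); auto. field_simplify; lra.
Qed.

Lemma seg t y : Allowed t -> (0 < y < t \/ t < y < 0) -> -1 < y < 1 /\ Rabs (uf y) < M0.
Proof.
  intros [Ht Hb] Hy.
  assert (Hy1 : -1 < y < 1) by lra. split; auto. apply uf_lt; auto.
  destruct Hy as [Hy|Hy].
  - assert (E3 : y ^ 3 = y * y * y) by ring.
    assert (0 < y ^ 3 < 1) by (rewrite E3; split; [apply Rmult_lt_0_compat; [apply Rmult_lt_0_compat|]; lra| nra]).
    rewrite Rabs_right by lra. assert (0 < (1 - y ^ 3) ^ 2) by (apply pow2_gt_0; lra). nra.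
  - assert (E3 : y ^ 3 - t ^ 3 = (y - t) * (t * t + t * y + y * y)) by ring.
    assert (0 < t * t + t * y + y * y) by nra.
    assert (0 < (y - t) * (t * t + t * y + y * y)) by (apply Rmult_lt_0_compat; lra).
    assert (y ^ 3 < 0) by (replace (y ^ 3) with (- ((-y) * (-y) * (-y))) by ring; assert (0 < (-y) * (-y) * (-y)) by (apply Rmult_lt_0_compat; [apply Rmult_lt_0_compat|]; lra); lra).
    assert (t ^ 3 < y ^ 3 < 0) by (split; lra).
    assert (t ^ 3 < 0) by lra.
    rewrite Rabs_left in Hb by lra. rewrite Rabs_left by lra.
    assert (-1 < t ^ 3) by (assert (Hq := pos13 t ltac:(lra)); lra).
    assert (0 < (y ^ 3 - t ^ 3) * (y ^ 3 + t ^ 3 + 6)) by (apply Rmult_lt_0_compat; lra).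
    nra.
Qed.

Lemma hf0 : hf 0 = 0.
Proof.
  unfold hf, Af, Bf. replace (r3 * 0 / (2 - 0)) with 0 by field.
  replace ((1 - 0 + 0 ^ 2) / (1 + 0) ^ 2) with 1 by field. rewrite atan_0, ln_1. ring.
Qed.

Lemma main_t t : Allowed t -> PSeries ak (uf t) = hf t.
Proof.
  intros HA.
  destruct (Req_dec t 0) as [->|Ht0].
  { rewrite hf0. unfold uf. replace (27 * 0 ^ 3 / (1 + 0 ^ 3) ^ 2) with 0 by field.
    rewrite PSeries_0. reflexivity. }
  set (phi := fun y => Fc (uf y) - hf y).
  assert (Hc : phi t = phi 0).
  { destruct (MVT_gen phi 0 t (fun _ => 0)) as [c [_ Hc]].
    - intros x Hx. assert (Hx' : 0 < x < t \/ t < x < 0) by (unfold Rmin, Rmax in Hx; destruct Rle_dec; lra).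
      assert (Hx0 : x <> 0) by lra.
      destruct (seg t x HA Hx') as [H1 H2]. apply deriv_zero; auto.
    - intros x Hx. destruct HA as [[Ht1 Ht2] _].
      assert (Hx' : -1 < x <= 1) by (unfold Rmin, Rmax in Hx; destruct Rle_dec; lra).
      unfold phi. apply continuity_pt_minus.
      + apply (continuity_pt_comp uf Fc). eapply deriv_cont. apply duf. lra. apply Fc_cont.
      + eapply deriv_cont. apply dhf. lra.
    - lra. }
  unfold phi in Hc. rewrite hf0 in Hc.
  assert (Eu0 : uf 0 = 0) by (unfold uf; field). rewrite Eu0 in Hc.
  rewrite (Fc_eq 0) in Hc by (rewrite Rabs_R0; unfold M0; lra).
  rewrite PSeries_0 in Hc. change (ak 0) with 0 in Hc.
  rewrite Fc_eq in Hc by (apply uf_le; auto). lra.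
Qed.


Lemma cbrt_cube z : cbrt z ^ 3 = z.
Proof.
  unfold cbrt. destruct (Rlt_dec 0 z) as [H|H].
  - rewrite <- Rpower_pow by (apply exp_pos). rewrite Rpower_mult.
    replace (1 / 3 * INR 3) with 1 by (simpl; field). apply Rpower_1; auto.
  - destruct (Rlt_dec z 0) as [H'|H'].
    + replace ((- Rpower (- z) (1 / 3)) ^ 3) with (- (Rpower (- z) (1 / 3) ^ 3)) by ring.
      rewrite <- Rpower_pow by (apply exp_pos). rewrite Rpower_mult.
      replace (1 / 3 * INR 3) with 1 by (simpl; field). rewrite Rpower_1; lra.
    + simpl. lra.
Qed.

Lemma cbrt_nz z : z <> 0 -> cbrt z <> 0.
Proof. intros Hz E. apply Hz. rewrite <- (cbrt_cube z), E. ring. Qed.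

Theorem mainTheorem1 (x y : R) (hy : y <> 0)
  (hxy : x / y >= 1 \/ x / y <= - (sqrt 2 + 1) ^ 2) :
  is_series (fun n : nat => series_term x y (S n))
    (6 * (atan (sqrt 3 * cbrt y / (2 * cbrt x - cbrt y))) ^ 2
     - 1 / 2 * (ln ((x + y) / (cbrt x + cbrt y) ^ 3)) ^ 2).
Proof.
  assert (Hs := sqrt_pos 2). assert (Hs2 : sqrt 2 * sqrt 2 = 2) by (apply sqrt_sqrt; lra).
  assert (Hx : x <> 0).
  { intros ->. unfold Rdiv in hxy. rewrite Rmult_0_l in hxy.
    assert (0 < (sqrt 2 + 1) ^ 2) by (apply pow2_gt_0; lra). lra. }
  assert (Ha3 : cbrt x ^ 3 = x) by apply cbrt_cube.
  assert (Hb3 : cbrt y ^ 3 = y) by apply cbrt_cube.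
  assert (Ha0 := cbrt_nz x Hx). assert (Hb0 := cbrt_nz y hy).
  set (a := cbrt x) in *. set (b := cbrt y) in *.
  set (t := b / a).
  assert (Hbt : b = t * a) by (unfold t; field; auto).
  assert (Hw : t ^ 3 = y / x) by (rewrite <- Ha3, <- Hb3, Hbt; field; auto).
  assert (Hzw : (x / y) * (y / x) = 1) by (field; auto).
  set (w := y / x) in *. set (z := x / y) in *.
  assert (HA : Allowed t).
  { destruct hxy as [Hz|Hz].
    - assert (Hw1 : 0 < w <= 1) by (split; nra).
      assert (Ht : 0 < t <= 1).
      { split.
        - destruct (Rle_lt_dec t 0) as [H|H]; auto.
          assert (t ^ 3 <= 0) by (replace (t ^ 3) with (t * (t * t)) by ring; nra). lra.
        - destruct (Rle_lt_dec t 1) as [H|H]; auto.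
          assert (1 < t ^ 3) by (replace (t ^ 3) with (t * (t * t)) by ring; nra). lra. }
      split. lra. rewrite Hw, Rabs_right by lra.
      assert (0 <= (1 - w) ^ 2) by apply pow2_ge_0. nra.
    - assert (Hc : (sqrt 2 + 1) ^ 2 = 3 + 2 * sqrt 2) by (simpl; nra).
      rewrite Hc in Hz.
      assert (H32 : 0 < 3 - 2 * sqrt 2).
      { assert (sqrt 2 < 3/2) by nra. lra. }
      assert (Hz0 : z < 0) by lra.
      assert (Hw1 : - (3 - 2 * sqrt 2) <= w < 0).
      { assert (Hwn : w < 0) by nra. split; [|exact Hwn].
        assert (E : (3 + 2 * sqrt 2) * (3 - 2 * sqrt 2) = 1) by nra.
        assert (E2 : (3 - 2 * sqrt 2) * (- z) >= 1).
        { assert (0 <= (3 - 2 * sqrt 2) * (- z - (3 + 2 * sqrt 2))) by (apply Rmult_le_pos; lra). nra. }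
        nra. }
      assert (Ht : -1 < t < 0).
      { split.
        - destruct (Rle_lt_dec t (-1)) as [H|H]; auto.
          assert (t ^ 3 <= -1) by (replace (t ^ 3) with (t * (t * t)) by ring; nra). nra.
        - destruct (Rle_lt_dec 0 t) as [H|H]; auto.
          assert (0 <= t ^ 3) by (replace (t ^ 3) with (t * (t * t)) by ring; nra). lra. }
      split. lra. rewrite Hw, Rabs_left by lra.
      assert (2 * sqrt 2 <= w + 3) by lra.
      assert (8 <= (w + 3) * (w + 3)) by nra. nra. }
  assert (Key := main_t t HA).
  assert (HA' := HA). destruct HA as [[Ht1 Ht2] _].
  assert (H13 := pos13 t Ht1).
  assert (Hxa : x = a ^ 3) by auto. assert (Hyb : y = (t * a) ^ 3) by (rewrite <- Hbt; auto).
  replace (6 * atan (sqrt 3 * b / (2 * a - b)) ^ 2 - 1 / 2 * ln ((x + y) / (a + b) ^ 3) ^ 2)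
    with (PSeries ak (uf t)).
  2:{ rewrite Key. unfold hf, Af, Bf, r3.
      replace (sqrt 3 * b / (2 * a - b)) with (sqrt 3 * t / (2 - t)).
      2:{ rewrite Hbt. replace (2 * a - t * a) with (a * (2 - t)) by ring. field. split; auto; lra. }
      replace ((x + y) / (a + b) ^ 3) with ((1 - t + t ^ 2) / (1 + t) ^ 2).
      reflexivity. rewrite Hxa, Hyb, Hbt. replace (a + t * a) with (a * (1 + t)) by ring. field. split; auto; lra. }
  eapply is_series_ext. 2:{ apply PSeries_shift, uf_le, HA'. }
  intros n. unfold series_term.
  assert (Hxy : x + y <> 0) by (rewrite Hxa, Hyb; replace (a ^ 3 + (t * a) ^ 3) with (a ^ 3 * (1 + t ^ 3)) by ring;
    apply Rmult_integral_contrapositive; split; [apply pow_nonzero; auto| lra]).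
  replace (uf t) with (27 * x * y * / (x + y) ^ 2) by (unfold uf; rewrite Hxa, Hyb; field; split; auto; lra).
  change (ak (S n)) with (1 / (INR (S n) ^ 2 * Binomial.C (3 * S n) (S n))).
  rewrite Rpow_mult_distr, pow_inv, <- pow_mult.
  assert (HC := C_pos (3 * S n) (S n)). assert (HN : INR (S n) <> 0) by (apply not_0_INR; lia).
  assert (HP := pow_nonzero (x + y) (2 * S n) Hxy).
  Req. field. repeat split; auto; lra.
Qed.
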